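(* Let $R$ be an exchange ring and $A\in GL_n(R)$ with $n\ge 2$. Then $A$ can be transformed by a finite sequence of elementary row and column operations to a matrix whose $1,1$ entry $d$ is a (von Neumann) regular element with $dR=(1-p)R$ and $Rd=R(1-q)$ for some idempotents $p,q\in R$ such that $RpR=RqR=R$.
   Context: All rings are unital. A ring $R$ is an exchange ring if for every $a\in R$ there is an idempotent $e\in aR$ with $1-e\in(1-a)R$ (equivalently, $R_R$ has the finite exchange property). An element $x\in R$ is regular if $xyx=x$ for some $y\in R$. An elementary row (resp. column) operation adds a left (resp. right) multiple by an element of $R$ of one row (resp. column) to a different row (resp. column). *)

(* Defs.v *)
From HB Require Import structures.
From mathcomp Require Import all_boot all_order all_algebra.
From Stdlib Require Import Relations.
Set Implicit Arguments. Unset Strict Implicit. Unset Printing Implicit Defensive.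
Import GRing.Theory.
Local Open Scope ring_scope.

Definition regular_elt (R : pzRingType) (x : R) : Prop :=
  exists y : R, x * y * x = x.

Definition exchange_ring (R : pzRingType) : Prop :=
  forall a : R, exists e : R,
    e * e = e /\ (exists r : R, e = a * r) /\ (exists s : R, 1 - e = (1 - a) * s).

Definition same_right_ideal (R : pzRingType) (x y : R) : Prop :=
  forall z : R, (exists r : R, z = x * r) <-> (exists s : R, z = y * s).

Definition same_left_ideal (R : pzRingType) (x y : R) : Prop :=
  forall z : R, (exists r : R, z = r * x) <-> (exists s : R, z = s * y).

(* RpR = R: the two-sided ideal generated by p (finite sums of a p b) is R,
   i.e. it contains 1 *)
Definition full_ideal (R : pzRingType) (p : R) : Prop :=
  exists (k : nat) (a b : 'I_k -> R), \sum_(i < k) a i * p * b i = 1.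

Definition invertible_mx (R : pzRingType) (n : nat) (A : 'M[R]_n) : Prop :=
  exists B : 'M[R]_n, A *m B = 1%:M /\ B *m A = 1%:M.

Definition row_op (R : pzRingType) (n : nat) (i j : 'I_n) (r : R) (A : 'M[R]_n)
  : 'M[R]_n :=
  \matrix_(k, l) (if k == i then A i l + r * A j l else A k l).

Definition col_op (R : pzRingType) (n : nat) (i j : 'I_n) (r : R) (A : 'M[R]_n)
  : 'M[R]_n :=
  \matrix_(k, l) (if l == i then A k i + A k j * r else A k l).

Definition elem_step (R : pzRingType) (n : nat) (A B : 'M[R]_n) : Prop :=
  exists (i j : 'I_n) (r : R), i != j /\ (B = row_op i j r A \/ B = col_op i j r A).

Definition elem_reach (R : pzRingType) (n : nat) : relation 'M[R]_n :=
  clos_refl_trans _ (@elem_step R n).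

(* Main.v *)
Require Import Defs.
From HB Require Import structures.
From mathcomp Require Import all_boot all_order all_algebra.
From Stdlib Require Import Relations.
Set Implicit Arguments. Unset Strict Implicit. Unset Printing Implicit Defensive.
Import GRing.Theory.
Local Open Scope ring_scope.



Lemma sum_delta (R : pzRingType) n (i : 'I_n) (F : 'I_n -> R) :
  \sum_p (1%:M : 'M[R]_n) i p * F p = F i.
Proof.
rewrite (bigD1 i) //= mxE eqxx mul1r big1 ?addr0 // => p /negPf.
by rewrite mxE eq_sym => ->; rewrite mul0r.
Qed.

Lemma sum_delta_r (R : pzRingType) n (i : 'I_n) (F : 'I_n -> R) :
  \sum_p F p * (1%:M : 'M[R]_n) p i = F i.
Proof.
rewrite (bigD1 i) //= mxE eqxx mulr1 big1 ?addr0 // => p /negPf.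
by rewrite mxE => ->; rewrite mulr0.
Qed.

Lemma row_op_mul (R : pzRingType) n (i j : 'I_n) r (A : 'M[R]_n) :
  row_op i j r A = row_op i j r 1%:M *m A.
Proof.
apply/matrixP=> k l; rewrite !mxE.
under eq_bigr => p _ do rewrite mxE.
case: eqP => _.
  under eq_bigr => p _ do rewrite mulrDl -mulrA.
  by rewrite big_split /= -mulr_sumr !sum_delta.
by rewrite sum_delta.
Qed.

Lemma col_op_mul (R : pzRingType) n (i j : 'I_n) r (A : 'M[R]_n) :
  col_op i j r A = A *m col_op i j r 1%:M.
Proof.
apply/matrixP=> k l; rewrite !mxE.
under eq_bigr => p _ do rewrite mxE.
case: eqP => _.
  under eq_bigr => p _ do rewrite mulrDr mulrA.
  by rewrite big_split /= -mulr_suml !sum_delta_r.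
by rewrite sum_delta_r.
Qed.

Lemma row_opK (R : pzRingType) n (i j : 'I_n) r (A : 'M[R]_n) : i != j ->
  row_op i j (- r) (row_op i j r A) = A.
Proof.
move=> ij; apply/matrixP=> k l; rewrite !mxE.
case: eqP => [->|_] //; rewrite eqxx eq_sym (negPf ij).
by rewrite mulNr addrK.
Qed.

Lemma col_opK (R : pzRingType) n (i j : 'I_n) r (A : 'M[R]_n) : i != j ->
  col_op i j (- r) (col_op i j r A) = A.
Proof.
move=> ij; apply/matrixP=> k l; rewrite !mxE.
case: eqP => [->|_] //; rewrite eqxx eq_sym (negPf ij).
by rewrite mulrN addrK.
Qed.


Lemma step_inv (R : pzRingType) n (A B : 'M[R]_n) :
  elem_step A B -> invertible_mx A -> invertible_mx B.
Proof.
move=> [i [j [r [ij [->|->]]]]] [X [AX XA]].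
  exists (X *m row_op i j (-r) 1%:M).
  rewrite row_op_mul; split.
    rewrite mulmxA -(mulmxA _ A) AX mulmx1 -row_op_mul.
    by rewrite -{1}(opprK r) row_opK.
  rewrite mulmxA -(mulmxA X) -row_op_mul row_opK //.
  by rewrite mulmx1.
exists (col_op i j (-r) 1%:M *m X).
rewrite col_op_mul; split.
  rewrite mulmxA -(mulmxA A) -col_op_mul col_opK //.
  by rewrite mulmx1.
rewrite -mulmxA (mulmxA X) XA mul1mx -col_op_mul.
by rewrite -{1}(opprK r) col_opK.
Qed.

Lemma reach_inv (R : pzRingType) n (A B : 'M[R]_n) :
  elem_reach A B -> invertible_mx A -> invertible_mx B.
Proof.
elim => //; first by move=> x y; apply: step_inv.
by move=> x y z _ H1 _ H2 /H1 /H2.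
Qed.

Lemma col_gather (R : pzRingType) n (A : 'M[R]_n) (i : 'I_n) (t : 'I_n -> R) :
  elem_reach A (\matrix_(k, l) (if l == i then A k i + \sum_(j | j != i) A k j * t j
                                else A k l)).
Proof.
pose M (s : seq 'I_n) : 'M[R]_n :=
  \matrix_(k, l) (if l == i then A k i + \sum_(j <- s) A k j * t j else A k l).
have H : forall s, all (fun j => j != i) s -> elem_reach A (M s).
  elim => [|j s IH] /=.
    have -> : M [::] = A.
      by apply/matrixP => k l; rewrite mxE big_nil addr0; case: eqP => [->|].
    by move=> _; apply: rt_refl.
  move=> /andP [ji /IH Hs]; apply: rt_trans Hs _; apply: rt_step.
  exists i, j, (t j); split; first by rewrite eq_sym.
  right; apply/matrixP => k l; rewrite !mxE.
  case: eqP => // _; rewrite eqxx (negPf ji) big_cons.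
  by rewrite [A k j * t j + _]addrC addrA.
set s := [seq j <- index_enum 'I_n | j != i].
suff <- : M s = \matrix_(k, l) (if l == i then A k i + \sum_(j | j != i) A k j * t j
                                else A k l) by apply: H; exact: filter_all.
by apply/matrixP => k l; rewrite !mxE big_filter.
Qed.

Lemma row_gather (R : pzRingType) n (A : 'M[R]_n) (i : 'I_n) (t : 'I_n -> R) :
  elem_reach A (\matrix_(k, l) (if k == i then A i l + \sum_(j | j != i) t j * A j l
                                else A k l)).
Proof.
pose M (s : seq 'I_n) : 'M[R]_n :=
  \matrix_(k, l) (if k == i then A i l + \sum_(j <- s) t j * A j l else A k l).
have H : forall s, all (fun j => j != i) s -> elem_reach A (M s).
  elim => [|j s IH] /=.
    have -> : M [::] = A.
      by apply/matrixP => k l; rewrite mxE big_nil addr0; case: eqP => [->|].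
    by move=> _; apply: rt_refl.
  move=> /andP [ji /IH Hs]; apply: rt_trans Hs _; apply: rt_step.
  exists i, j, (t j); split; first by rewrite eq_sym.
  left; apply/matrixP => k l; rewrite !mxE.
  case: eqP => // _; rewrite eqxx (negPf ji) big_cons.
  by rewrite [t j * A j l + _]addrC addrA.
set s := [seq j <- index_enum 'I_n | j != i].
suff <- : M s = \matrix_(k, l) (if k == i then A i l + \sum_(j | j != i) t j * A j l
                                else A k l) by apply: H; exact: filter_all.
by apply/matrixP => k l; rewrite !mxE big_filter.
Qed.



Lemma REG (R : pzRingType) m (A : 'M[R]_(m.+2)) : exchange_ring R -> invertible_mx A ->
  exists B e w, elem_reach A B /\ B ord0 ord0 = e * A ord0 ord0 /\ e * e = e /\
                e = A ord0 ord0 * w.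
Proof.
move=> ex [X [AX _]].
set a := A ord0 ord0.
have row1 : \sum_j A ord0 j * X j ord0 = 1.
  by have := congr1 (fun M : 'M[R]_(m.+2) => M ord0 ord0) AX; rewrite !mxE eqxx mulr1n.
have tail : \sum_(j | j != ord0) A ord0 j * X j ord0 = 1 - a * X ord0 ord0.
  by rewrite -row1 [in RHS](bigD1 ord0) //= addrAC subrr add0r.
move: (ex (a * X ord0 ord0)) => [e [ee [[rho He] [sig Hs]]]].
exists (\matrix_(k, l) (if l == ord0 then A k ord0 +
          \sum_(j | j != ord0) A k j * (X j ord0 * sig * - a) else A k l)), e,
       (X ord0 ord0 * rho).
split; first exact: col_gather.
split; last by split; [ | rewrite He mulrA].
rewrite mxE eqxx.
under eq_bigr do rewrite !mulrA.
rewrite -!mulr_suml tail -Hs.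
by rewrite mulrN mulrBl mul1r opprB addrC subrK.
Qed.



Lemma sum_upd (R : pzRingType) n (i0 i1 : 'I_n) (F G : 'I_n -> R) v :
  i1 != i0 ->
  \sum_(j | j != i0) (if j == i1 then v else F j) * G j =
  \sum_(j | j != i0) F j * G j + (v - F i1) * G i1.
Proof.
move=> h; rewrite (bigD1 i1) //= eqxx [in RHS](bigD1 i1) //=.
rewrite (eq_bigr (fun j => F j * G j)); last by move=> j /andP [_ /negPf ->].
rewrite mulrBl -addrA (addrC (F i1 * G i1)).
by rewrite -addrA subrK addrC.
Qed.

Lemma sum_upd_l (R : pzRingType) n (i0 i1 : 'I_n) (F G : 'I_n -> R) v :
  i1 != i0 ->
  \sum_(j | j != i0) G j * (if j == i1 then v else F j) =
  \sum_(j | j != i0) G j * F j + G i1 * (v - F i1).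
Proof.
move=> h; rewrite (bigD1 i1) //= eqxx [in RHS](bigD1 i1) //=.
rewrite (eq_bigr (fun j => G j * F j)); last by move=> j /andP [_ /negPf ->].
rewrite mulrBr -addrA (addrC (G i1 * F i1)).
by rewrite -addrA subrK addrC.
Qed.

Lemma step_col (R : pzRingType) n (i j : 'I_n) r (A : 'M[R]_n) :
  i != j -> elem_reach A (col_op i j r A).
Proof. by move=> ij; apply: rt_step; exists i, j, r; split => //; right. Qed.

Lemma step_row (R : pzRingType) n (i j : 'I_n) r (A : 'M[R]_n) :
  i != j -> elem_reach A (row_op i j r A).
Proof. by move=> ij; apply: rt_step; exists i, j, r; split => //; left. Qed.

Lemma reach_trans (R : pzRingType) n (A B C : 'M[R]_n) :
  elem_reach A B -> elem_reach B C -> elem_reach A C.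
Proof. exact: rt_trans. Qed.

Lemma RT (R : pzRingType) m (A : 'M[R]_(m.+2)) e w :
  invertible_mx A -> e * e = e -> e * A ord0 ord0 = A ord0 ord0 ->
  A ord0 ord0 * w = e ->
  exists B K y, elem_reach A B /\ B ord0 ord0 = K * (1 - e) * y /\ e * K = K.
Proof.
move=> [X [AX _]] ee ex xw.
set x := A ord0 ord0 in ex xw *.
pose j1 : 'I_(m.+2) := lift ord0 ord0.
have j10 : j1 != ord0 by rewrite eq_sym neq_lift.
have j01 : ord0 != j1 by rewrite neq_lift.
set b := A ord0 j1.
have row1 : \sum_j A ord0 j * X j ord0 = 1.
  by have := congr1 (fun M : 'M[R]_(m.+2) => M ord0 ord0) AX; rewrite !mxE eqxx mulr1n.
have tail : \sum_(j | j != ord0) A ord0 j * X j ord0 = 1 - x * X ord0 ord0.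
  by rewrite -row1 [in RHS](bigD1 ord0) //= addrAC subrr add0r.
pose A1 := col_op j1 ord0 (-(w * b)) A.
pose A2 := col_op j1 ord0 (-1) A1.
pose A3 := col_op ord0 j1 1 A2.
pose b' := b + x * (-(w*b)).
pose t := fun j => - (X j ord0 * b').
exists (\matrix_(k,l) (if l == ord0 then A3 k ord0 + \sum_(j | j != ord0) A3 k j * t j
                       else A3 k l)).
exists (x * X ord0 ord0 + (e * b + x) * X j1 ord0), b.
split.
  apply: (reach_trans _ (col_gather A3 ord0 t)).
  rewrite /A3 /A2 /A1.
  apply: (reach_trans _ (step_col _ _ j01)).
  apply: (reach_trans _ (step_col _ _ j10)).
  exact: step_col.
split; last by rewrite mulrDr !mulrA mulrDr !mulrA ee ex.
rewrite mxE eqxx.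
have A3_00 : A3 ord0 ord0 = b'.
  rewrite /A3 /A2 /A1 !mxE eqxx (negPf j01).
  by rewrite mulr1 mulrN1 addrC subrK.
have A3_0j : forall j, j != ord0 -> A3 ord0 j = if j == j1 then b' - x else A ord0 j.
  move=> j jn0; rewrite /A3 /A2 /A1 !mxE (negPf jn0).
  by case: (j == j1); rewrite ?(negPf j01) ?mulrN1.
rewrite (eq_bigr (fun j => (if j == j1 then b' - x else A ord0 j) * t j)); last first.
  by move=> j /A3_0j ->.
rewrite sum_upd // A3_00.
rewrite (eq_bigr (fun j => - (A ord0 j * X j ord0 * b'))); last first.
  by move=> j _; rewrite /t mulrN mulrA.
rewrite sumrN -mulr_suml tail.
have hb' : b' = (1 - e) * b by rewrite /b' mulrN mulrA xw mulrBl mul1r.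
have hv : b' - x - b = -(e*b + x).
  by rewrite hb' mulrBl mul1r addrAC [b - e * b - b]addrAC subrr add0r opprD.
rewrite -[A ord0 j1]/b hv /t mulrNN addrA mulrBl mul1r opprB [b' + _]addrC subrK.
rewrite -[RHS]mulrA -hb' mulrDl !mulrA.
by rewrite !mulrDl ?mulrA.
Qed.

Lemma LT (R : pzRingType) m (A : 'M[R]_(m.+2)) e w :
  invertible_mx A -> e * e = e -> e * A ord0 ord0 = A ord0 ord0 ->
  exists B L N, elem_reach A B /\
    B ord0 ord0 = L * (1 - w * A ord0 ord0) * N * A ord0 ord0 /\ e * L = L.
Proof.
move=> [X [_ XA]] ee ed.
set d := A ord0 ord0 in ed *.
pose j1 : 'I_(m.+2) := lift ord0 ord0.
have j10 : j1 != ord0 by rewrite eq_sym neq_lift.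
have j01 : ord0 != j1 by rewrite neq_lift.
set c := A j1 ord0.
have col1 : \sum_i X ord0 i * A i ord0 = 1.
  by have := congr1 (fun M : 'M[R]_(m.+2) => M ord0 ord0) XA; rewrite !mxE eqxx mulr1n.
have tail : \sum_(i | i != ord0) X ord0 i * A i ord0 = 1 - X ord0 ord0 * d.
  by rewrite -col1 [in RHS](bigD1 ord0) //= addrAC subrr add0r.
pose A1 := row_op j1 ord0 (-(c * w)) A.
pose A2 := row_op j1 ord0 (-1) A1.
pose A3 := row_op ord0 j1 e A2.
pose c' := c + (-(c * w)) * d.
pose t := fun i => - (e * c' * X ord0 i).
exists (\matrix_(k,l) (if k == ord0 then A3 ord0 l + \sum_(i | i != ord0) t i * A3 i l
                       else A3 k l)).
exists (e * c), (X ord0 ord0 + X ord0 j1 * (c * w + 1)).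
split.
  apply: (reach_trans _ (row_gather A3 ord0 t)).
  rewrite /A3 /A2 /A1.
  apply: (reach_trans _ (step_row _ _ j01)).
  apply: (reach_trans _ (step_row _ _ j10)).
  exact: step_row.
split; last by rewrite mulrA ee.
rewrite mxE eqxx.
have A3_00 : A3 ord0 ord0 = e * c'.
  rewrite /A3 /A2 /A1 !mxE eqxx (negPf j01).
  by rewrite mulN1r mulrBr ed addrC subrK.
have A3_i0 : forall i, i != ord0 -> A3 i ord0 = if i == j1 then c' - d else A i ord0.
  move=> i in0; rewrite /A3 /A2 /A1 !mxE (negPf in0).
  by case: (i == j1); rewrite ?(negPf j01) ?mulN1r.
rewrite (eq_bigr (fun i => t i * (if i == j1 then c' - d else A i ord0))); last first.
  by move=> i /A3_i0 ->.
rewrite sum_upd_l // A3_00.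
rewrite (eq_bigr (fun i => - (e * c' * (X ord0 i * A i ord0)))); last first.
  by move=> i _; rewrite /t mulNr mulrA.
rewrite sumrN -mulr_sumr tail.
have hc' : c' = c * (1 - w * d) by rewrite /c' mulNr -mulrA mulrBr mulr1.
have hv : c' - d - c = -((c * w + 1) * d).
  rewrite /c' mulNr addrAC [c - _ - c]addrAC subrr add0r -mulrA.
  by rewrite mulrDl mul1r opprD mulrA.
rewrite -[A j1 ord0]/c hv /t mulrNN addrA mulrBr mulr1 opprB [e * c' + _]addrC subrK.
rewrite -[e * c * (1 - w * d)]mulrA -hc'; clearbody c'; rewrite mulrDr mulrDl.
by rewrite ?mulrA.
Qed.



Lemma full_of (R : pzRingType) (p x y : R) : x * p * y = 1 - p -> full_ideal p.
Proof.
move=> h; exists 2%N, (fun i : 'I_2 => if val i == 0%N then x else 1),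
  (fun i : 'I_2 => if val i == 0%N then y else 1).
by rewrite big_ord_recl big_ord1 /= h mul1r mulr1 subrK.
Qed.

Lemma idem_compl (R : pzRingType) (x : R) : x * x = x -> (1 - x) * (1 - x) = 1 - x.
Proof. by move=> h; rewrite mulrBl mul1r mulrBr mulr1 h subrr subr0. Qed.

Lemma compl_mulr (R : pzRingType) (e g : R) : e * g = g -> (1 - e) * (1 - g) = 1 - e.
Proof. by move=> h; rewrite mulrBl mul1r mulrBr mulr1 h opprB addrA subrK. Qed.

Lemma compl_mull (R : pzRingType) (f g : R) : g * f = g -> (1 - g) * (1 - f) = 1 - f.
Proof. by move=> h; rewrite mulrBr mulr1 mulrBl mul1r h opprB addrA subrK. Qed.

Lemma oneBB (R : pzRingType) (x : R) : 1 - (1 - x) = x.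
Proof. by rewrite opprB addrC subrK. Qed.

Theorem lemma2p7 (R : pzRingType) (m : nat) (A : 'M[R]_(m.+2)) :
  exchange_ring R -> invertible_mx A ->
  exists B : 'M[R]_(m.+2),
    elem_reach A B /\
    let d := B ord0 ord0 in
    regular_elt d /\
    exists p q : R,
      p * p = p /\ q * q = q /\
      same_right_ideal d (1 - p) /\ same_left_ideal d (1 - q) /\
      full_ideal p /\ full_ideal q.
Proof.
move=> ex Ainv.
have [A1 [e [w [r1 [h1 [ee he]]]]]] := REG ex Ainv.
have A1inv := reach_inv r1 Ainv.
have ex1 : e * A1 ord0 ord0 = A1 ord0 ord0 by rewrite h1 mulrA ee.
have xw : A1 ord0 ord0 * w = e by rewrite h1 -mulrA -he ee.
have [A2 [K [y [r2 [h2 eK]]]]] := RT A1inv ee ex1 xw.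
have A2inv := reach_inv r2 A1inv.
have [A3 [e3 [w3 [r3 [h3 [ee3 he3]]]]]] := REG ex A2inv.
have A3inv := reach_inv r3 A2inv.
have ed2 : e * A2 ord0 ord0 = A2 ord0 ord0 by rewrite h2 !mulrA eK.
have ee3' : e * e3 = e3 by rewrite he3 mulrA ed2.
have ed3 : e * A3 ord0 ord0 = A3 ord0 ord0 by rewrite h3 mulrA ee3'.
have [A4 [L [N [r4 [h4 eL]]]]] := LT w3 A3inv ee ed3.
have A4inv := reach_inv r4 A3inv.
have [A5 [e5 [w5 [r5 [h5 [ee5 he5]]]]]] := REG ex A4inv.
exists A5; split.
  exact: (reach_trans r1 (reach_trans r2 (reach_trans r3 (reach_trans r4 r5)))).
move: h1 he ex1 xw h2 ed2 he3 h3 ed3 h4 h5 he5.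
set d1 := A1 ord0 ord0; set d2 := A2 ord0 ord0; set d3 := A3 ord0 ord0.
set d4 := A4 ord0 ord0; set d5 := A5 ord0 ord0.
move=> h1 he ex1 xw h2 ed2 he3 h3 ed3 h4 h5 he5 /=.
set f3 := w3 * d3.
have d3w3 : d3 * w3 = e3 by rewrite h3 -mulrA -he3 ee3.
have d3f3 : d3 * f3 = d3 by rewrite /f3 mulrA d3w3 h3 mulrA ee3.
have d4f3 : d4 * f3 = d4 by rewrite h4 -!mulrA d3f3.
have ed4 : e * d4 = d4 by rewrite h4 !mulrA eL.
have d5w5 : d5 * w5 = e5 by rewrite h5 -mulrA -he5 ee5.
have e5d5 : e5 * d5 = d5 by rewrite h5 mulrA ee5.
have ee5' : e * e5 = e5 by rewrite he5 mulrA ed4.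
have d5f3 : d5 * f3 = d5 by rewrite h5 -!mulrA d4f3.
have reg : d5 * w5 * d5 = d5 by rewrite d5w5 e5d5.
set f5 := w5 * d5.
have ff5 : f5 * f5 = f5 by rewrite /f5 mulrA -(mulrA w5) d5w5 -mulrA e5d5.
have f5f3 : f5 * f3 = f5 by rewrite /f5 -mulrA d5f3.
split; first by exists w5.
exists (1 - e5), (1 - f5).
split; first exact: idem_compl.
split; first exact: idem_compl.
split.
  move=> z; rewrite oneBB; split => [[r ->]|[s ->]].
    by exists (d5 * r); rewrite mulrA e5d5.
  by exists (w5 * s); rewrite mulrA d5w5.
split.
  move=> z; rewrite oneBB; split => [[r ->]|[s ->]].
    by exists (r * d5); rewrite /f5 -!mulrA (mulrA d5) reg.
  by exists (s * w5); rewrite /f5 mulrA.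
split.
  set Q := e5 * L * (1 - f3) * N * e3 * K.
  have hd5 : d5 = Q * (1 - e) * y.
    by rewrite h5 h4 -[w3 * d3]/f3 h3 h2 /Q !mulrA.
  apply: (@full_of _ _ (Q * (1 - e)) (y * w5)).
  rewrite oneBB -(mulrA Q) compl_mulr // mulrA -hd5 d5w5 //.
set Q := e5 * L.
have hd5 : d5 = Q * (1 - f3) * (N * d3) by rewrite h5 h4 /Q !mulrA.
apply: (@full_of _ _ (w5 * Q) ((1 - f3) * (N * d3))).
rewrite oneBB (mulrA (w5 * Q * (1 - f5))) -(mulrA (w5 * Q)) compl_mull //.
by rewrite /f5 hd5 !mulrA.
Qed.
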